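(* Let $0<\varepsilon<1/7$ be a constant, $p\in(0,1)$, and $G\sim G(n,p)$. Let $H$ be a balanced graph on $m$ vertices ($m$ dividing $n$) with average degree $\alpha$, $2<\alpha<3$. If $m\le\min\!\left(\sqrt{\varepsilon/p},\,2^{-1/4}p^{\alpha/4}\sqrt{\varepsilon n}\right)$ (equivalently $\varepsilon\ge m^2p$ and $\varepsilon^2\ge 2\frac{m^4}{n^2p^{\alpha}}$), then for every $\beta\in[0,1)$, \[\Pr\big[X_H(G)\le\beta\,\mathbb E[X_H(G)]\big]\le\frac{4\varepsilon}{(1-\beta)^2}.\]
   Context: A graph with average degree $\alpha$ is balanced if every induced subgraph has average degree at most $\alpha$. $G(n,p)$ is the Erdős–Rényi random graph on $[n]$. With $H$ on vertex set $[m]$, partition $[n]$ into parts $P_i=\{(i-1)\frac nm+1,\dots,i\frac nm\}$, $1\le i\le m$. $X_H(G)$ is the number of sets $S=\{v_1,\dots,v_m\}$ with $v_i\in P_i$ for all $i$ such that $i\mapsto v_i$ is an isomorphism from $H$ onto the induced subgraph $G[S]$. *)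

(* Defs.v *)
From HB Require Import structures.
From mathcomp Require Import all_boot all_order all_algebra.
From mathcomp Require Import reals exp.
Set Implicit Arguments. Unset Strict Implicit. Unset Printing Implicit Defensive.
Import Order.TTheory GRing.Theory Num.Theory.
Local Open Scope ring_scope.

Definition pairs (k : nat) : {set {set 'I_k}} := [set e : {set 'I_k} | #|e| == 2%N].
Definition is_graph (k : nat) (E : {set {set 'I_k}}) : bool := E \subset pairs k.

Definition avg_deg (R : realType) (k : nat) (E : {set {set 'I_k}}) : R :=
  (2 * #|E|)%N%:R / k%:R.

Definition balanced (R : realType) (k : nat) (E : {set {set 'I_k}}) : Prop :=
  forall S : {set 'I_k}, S != set0 ->
    (2 * #|[set e in E | e \subset S]|)%N%:R / #|S|%:R <= avg_deg R E.

Definition gnp_weight (R : realType) (n : nat) (p : R) (E : {set {set 'I_n}}) : R :=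
  p ^+ #|E| * (1 - p) ^+ (#|pairs n| - #|E|)%N.

Definition gnp_prob (R : realType) (n : nat) (p : R) (A : pred {set {set 'I_n}}) : R :=
  \sum_(E in powerset (pairs n) | A E) gnp_weight p E.

Definition gnp_expect (R : realType) (n : nat) (p : R) (X : {set {set 'I_n}} -> nat) : R :=
  \sum_(E in powerset (pairs n)) gnp_weight p E * (X E)%:R.

(* Part P_i (0-indexed) of [n] when the parts have size n/m:
   vertex v (0-indexed) lies in part v %/ (n %/ m). *)
Definition in_part (n m : nat) (i : 'I_m) (v : 'I_n) : bool := ((v %/ (n %/ m))%N == i).

(* X_H(G): number of vertex sets S = {v_1..v_m} with v_i in P_i such that
   i |-> v_i is an isomorphism from H onto G[S]. *)
Definition X_H (n m : nat) (EH : {set {set 'I_m}}) (EG : {set {set 'I_n}}) : nat :=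
  #|[set S : {set 'I_n} | [exists f : {ffun 'I_m -> 'I_n},
      [&& S == f @: [set: 'I_m],
          [forall i, in_part i (f i)] &
          [forall i, forall j, (i != j) ==>
              (([set f i; f j] \in EG) == ([set i; j] \in EH))]]]]|.

(* Main.v *)
Require Import Defs.
From HB Require Import structures.
From mathcomp Require Import all_boot all_order all_algebra.
From mathcomp Require Import reals exp.
From mathcomp Require Import zify ring lra.
Import Order.TTheory GRing.Theory Num.Theory.
Local Open Scope ring_scope.

Lemma sumsetP (R : realType) (T : finType) (G : T -> bool -> R) :
  \sum_(E : {set T}) \prod_(x : T) G x (x \in E) = \prod_(x : T) (G x true + G x false).
Proof.
rewrite (eq_bigr (fun x => \sum_(b : bool) G x b)); last by move=> x _; rewrite big_bool.
rewrite bigA_distr_bigA /=.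
rewrite (reindex (fun E : {set T} => [ffun x => x \in E])) /=.
  by apply: eq_bigr => E _; apply: eq_bigr => x _; rewrite ffunE.
exists (fun f : {ffun T -> bool} => [set x | f x]) => [E _|f _].
  by apply/setP => x; rewrite inE ffunE.
by apply/ffunP => x; rewrite ffunE inE.
Qed.

Lemma prod_indic (R : realType) (T : finType) (b : T -> bool) :
  \prod_(x : T) ((b x)%:R : R) = ([forall x, b x])%:R.
Proof.
case: forallP => [H|H].
  by rewrite big1 // => x _; rewrite H.
have [x Hx] : exists x, ~~ b x.
  apply/existsP; apply: contraT; rewrite negb_exists => /forallP H'.
  by exfalso; apply: H => x; have := H' x; rewrite negbK.
by rewrite (bigD1 x) //= (negbTE Hx) mul0r.
Qed.

Lemma prod_if (R : realType) (T : finType) (A : {set T}) (u : R) :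
  \prod_(x : T) (if x \in A then u else 1) = u ^+ #|A|.
Proof. by rewrite -big_mkcond prodr_const. Qed.

Lemma sum_pow_card (R : realType) (m : nat) (y : R) :
  \sum_(K : {set 'I_m}) y ^+ #|K| = (1 + y) ^+ m.
Proof.
rewrite (eq_bigr (fun K : {set 'I_m} => \prod_(x : 'I_m) (if x \in K then y else 1))); last by move=> K _; rewrite prod_if.
rewrite (@sumsetP _ _ (fun _ b => if b then y else 1)) /=.
by rewrite prodr_const card_ord addrC.
Qed.

Set Implicit Arguments. Unset Strict Implicit. Unset Printing Implicit Defensive.

Definition Fw (R : realType) (n : nat) (p : R) (x : {set 'I_n}) (b : bool) : R :=
  if x \in pairs n then (if b then p else 1 - p) else (if b then 0 else 1).

Lemma gnp_sum_all (R : realType) (n : nat) (p : R) (phi : {set {set 'I_n}} -> R) :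
  \sum_(E in powerset (pairs n)) gnp_weight p E * phi E =
  \sum_(E : {set {set 'I_n}}) (\prod_x Fw p x (x \in E)) * phi E.
Proof.
rewrite big_mkcond /=; apply: eq_bigr => E _.
rewrite powersetE; case: (boolP (E \subset pairs n)) => HE.
  congr (_ * _).
  rewrite (eq_bigr (fun x => (if x \in E then p else 1) * (if x \in pairs n :\: E then 1 - p else 1))).
    rewrite big_split /= !prod_if /gnp_weight cardsD (setIidPr HE) //.
  move=> x _; rewrite /Fw in_setD.
  case: (boolP (x \in E)) => xE /=.
    by rewrite (subsetP HE x xE) mulr1.
  by case: (x \in pairs n); rewrite ?mul1r.
case/subsetPn: HE => x xE xP.
by rewrite (bigD1 x) //= /Fw xE (negbTE xP) !mul0r.
Qed.

Lemma gnp_prob_sum (R : realType) (n : nat) (p : R) (P : pred {set {set 'I_n}}) :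
  gnp_prob p P = \sum_(E in powerset (pairs n)) gnp_weight p E * (P E)%:R.
Proof.
rewrite /gnp_prob big_mkcondr /=; apply: eq_bigr => E _.
by case: (P E); rewrite ?mulr1 ?mulr0.
Qed.

Lemma gnp_AB_gen (R : realType) (n : nat) (p : R) (A B : {set {set 'I_n}}) :
  gnp_prob p (fun E => (A \subset E) && (B \subset ~: E)) =
  \prod_(x : {set 'I_n}) (Fw p x true * ((x \in B) ==> false)%:R + Fw p x false * ((x \in A) ==> false)%:R).
Proof.
rewrite gnp_prob_sum gnp_sum_all.
transitivity (\sum_(E : {set {set 'I_n}}) \prod_x (Fw p x (x \in E) * (((x \in A) ==> (x \in E)) && ((x \in B) ==> ~~ (x \in E)))%:R)).
  apply: eq_bigr => E _; rewrite big_split /= prod_indic; congr (_ * _%:R); congr (nat_of_bool _).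
  apply/idP/forallP => [/andP[/subsetP H1 /subsetP H2] x|H].
    apply/andP; split; apply/implyP => Hx; first exact: H1.
    by have := H2 x Hx; rewrite inE.
  apply/andP; split; apply/subsetP => x Hx; have /andP[h1 h2] := H x.
    exact: (implyP h1).
  by rewrite inE; exact: (implyP h2).
rewrite (@sumsetP _ _ (fun x b => Fw p x b * (((x \in A) ==> b) && ((x \in B) ==> ~~ b))%:R)).
apply: eq_bigr => x _ /=.
by rewrite !implybT /= andbT.
Qed.

Lemma gnp_AB_le (R : realType) (n : nat) (p : R) (A B : {set {set 'I_n}}) :
  0 <= p <= 1 -> A \subset pairs n -> B \subset pairs n ->
  gnp_prob p (fun E => (A \subset E) && (B \subset ~: E)) <= p ^+ #|A| * (1 - p) ^+ #|B|.
Proof.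
move=> /andP[p0 p1] /subsetP HA /subsetP HB.
rewrite gnp_AB_gen -!prod_if -big_split /=.
apply: ler_prod => x _; rewrite /Fw !implybF.
have q0 : 0 <= 1 - p by rewrite subr_ge0.
case: (boolP (x \in A)) => xA; case: (boolP (x \in B)) => xB /=;
  rewrite ?(HA x xA) ?(HB x xB) !(mulr1,mulr0,mul1r,addr0,add0r) ?lexx ?andbT ?mulr_ge0 //.
case: (x \in pairs n); rewrite ?add0r ?lexx ?ler01 //.
by rewrite addrC subrK lexx ler01.
Qed.

Lemma gnp_AB_eq (R : realType) (n : nat) (p : R) (A B : {set {set 'I_n}}) :
  A \subset pairs n -> B \subset pairs n -> [disjoint A & B] ->
  gnp_prob p (fun E => (A \subset E) && (B \subset ~: E)) = p ^+ #|A| * (1 - p) ^+ #|B|.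
Proof.
move=> /subsetP HA /subsetP HB /disjointFr HAB.
rewrite gnp_AB_gen -!prod_if -big_split /=.
apply: eq_bigr => x _; rewrite /Fw !implybF.
case: (boolP (x \in A)) => xA; case: (boolP (x \in B)) => xB /=.
- by rewrite HAB in xB.
- by rewrite (HA x xA) !(mulr1,mulr0,mul1r,addr0,add0r).
- by rewrite (HB x xB) !(mulr1,mulr0,mul1r,addr0,add0r).
- case: (x \in pairs n); rewrite !(mulr1,mulr0,mul1r,addr0,add0r) //.
  by rewrite addrC subrK.
Qed.

Definition good (n m : nat) (f : {ffun 'I_m -> 'I_n}) := [forall i, in_part i (f i)].
Definition iso (n m : nat) (EH : {set {set 'I_m}}) (EG : {set {set 'I_n}}) (f : {ffun 'I_m -> 'I_n}) :=
  [forall i, forall j, (i != j) ==> (([set f i; f j] \in EG) == ([set i; j] \in EH))].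
Definition Af (n m : nat) (EH : {set {set 'I_m}}) (f : {ffun 'I_m -> 'I_n}) :=
  [set f @: e | e : {set 'I_m} in EH].
Definition Bf (n m : nat) (EH : {set {set 'I_m}}) (f : {ffun 'I_m -> 'I_n}) :=
  [set f @: e | e : {set 'I_m} in pairs m :\: EH].

Lemma good_part (n m : nat) (f g : {ffun 'I_m -> 'I_n}) i j :
  good f -> good g -> f i = g j -> i = j.
Proof.
move=> /forallP Hf /forallP Hg E.
have := Hf i; have := Hg j; rewrite /in_part E => /eqP -> /eqP H.
by apply: ord_inj.
Qed.

Lemma good_inj (n m : nat) (f : {ffun 'I_m -> 'I_n}) : good f -> injective f.
Proof. by move=> gf i j; apply: good_part. Qed.

Lemma card_sum (T : finType) (R : realType) (P : pred T) :
  (#|[set x | P x]|%:R : R) = \sum_x (P x)%:R.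
Proof.
rewrite -sumr_const big_mkcond /=; apply: eq_bigr => x _.
by rewrite inE; case: (P x).
Qed.

Lemma X_H_sum (R : realType) (n m : nat) (EH : {set {set 'I_m}}) (EG : {set {set 'I_n}}) :
  ((X_H EH EG)%:R : R) = \sum_f ((good f) && iso EH EG f)%:R.
Proof.
rewrite -card_sum /X_H.
set Fs := [set f | good f && iso EH EG f].
have -> : [set S : {set 'I_n} | [exists f : {ffun 'I_m -> 'I_n},
      [&& S == f @: [set: 'I_m],
          [forall i, in_part i (f i)] &
          [forall i, forall j, (i != j) ==>
              (([set f i; f j] \in EG) == ([set i; j] \in EH))]]]]
   = (fun f : {ffun 'I_m -> 'I_n} => f @: [set: 'I_m]) @: Fs.
  apply/setP => S; rewrite inE; apply/existsP/imsetP => [[f /and3P[/eqP -> H1 H2]]|[f]].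
    by exists f => //; rewrite inE; apply/andP.
  rewrite inE => /andP[H1 H2] ->; exists f; apply/and3P; split => //.
rewrite card_in_imset // => f g; rewrite !inE => /andP[gf _] /andP[gg _] E.
apply/ffunP => i.
have : f i \in g @: [set: 'I_m] by rewrite -E imset_f.
case/imsetP => j _ Hj.
by rewrite Hj (good_part gf gg Hj).
Qed.

Lemma imset2E (n m : nat) (f : {ffun 'I_m -> 'I_n}) (i j : 'I_m) :
  f @: [set i; j] = [set f i; f j].
Proof. by rewrite imsetU1 imset_set1. Qed.

Lemma iso_AB (n m : nat) (EH : {set {set 'I_m}}) (EG : {set {set 'I_n}}) (f : {ffun 'I_m -> 'I_n}) :
  is_graph EH ->
  iso EH EG f = (Af EH f \subset EG) && (Bf EH f \subset ~: EG).
Proof.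
move=> /subsetP gH.
apply/forallP/andP => [H|[/subsetP H1 /subsetP H2] i].
  split; apply/subsetP => x /imsetP[e He ->].
    have := gH e He; rewrite inE => /cards2P[i [j [ij E]]]; subst e.
    move/forallP: (H i) => /(_ j); rewrite ij /= => /eqP.
    by rewrite imset2E => ->.
  move: He; rewrite inE => /andP[He Hp].
  move: Hp; rewrite inE => /cards2P[i [j [ij E]]]; subst e.
  move/forallP: (H i) => /(_ j); rewrite ij /= (negbTE He) => /eqP.
  by rewrite imset2E inE => ->.
apply/forallP => j; apply/implyP => ij.
case: (boolP ([set i; j] \in EH)) => He.
  rewrite -imset2E (H1 (f @: [set i; j])) //.
  by apply/imsetP; exists [set i; j].
have Hp : [set i; j] \in pairs m :\: EH.
  by rewrite !inE He; apply/cards2P; exists i, j.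
have : f @: [set i; j] \in Bf EH f by apply/imsetP; exists [set i; j].
by move/H2; rewrite inE imset2E => /negbTE ->.
Qed.

Definition agree (n m : nat) (f g : {ffun 'I_m -> 'I_n}) := [set i | f i == g i].

Lemma inter_sub (n m : nat) (f g : {ffun 'I_m -> 'I_n}) (D D' : {set {set 'I_m}}) :
  good f -> good g ->
  [set f @: e | e : {set 'I_m} in D] :&: [set g @: e | e : {set 'I_m} in D'] \subset
  [set f @: e | e : {set 'I_m} in [set e in D | e \subset agree f g]].
Proof.
move=> gf gg; apply/subsetP => x; rewrite inE => /andP[/imsetP[e He ->] /imsetP[e' He' E]].
apply/imsetP; exists e => //; rewrite inE He /=.
apply/subsetP => i Hi; rewrite inE.
have : f i \in g @: e' by rewrite -E imset_f.
case/imsetP => j _ Hj.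
by rewrite Hj (good_part gf gg Hj).
Qed.

Lemma card_imset_good (n m : nat) (f : {ffun 'I_m -> 'I_n}) (D : {set {set 'I_m}}) :
  good f -> #|[set f @: e | e : {set 'I_m} in D]| = #|D|.
Proof. by move=> gf; rewrite card_imset //; apply: imset_inj; apply: good_inj. Qed.

Lemma imset_pairs (n m : nat) (f : {ffun 'I_m -> 'I_n}) (D : {set {set 'I_m}}) :
  good f -> D \subset pairs m -> [set f @: e | e : {set 'I_m} in D] \subset pairs n.
Proof.
move=> gf /subsetP HD; apply/subsetP => x /imsetP[e He ->].
have := HD e He; rewrite !inE => /eqP <-.
by rewrite card_imset //; apply: good_inj.
Qed.

Lemma Af_pairs (n m : nat) EH (f : {ffun 'I_m -> 'I_n}) :
  good f -> is_graph EH -> Af EH f \subset pairs n.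
Proof. by move=> gf gH; apply: imset_pairs. Qed.

Lemma Bf_pairs (n m : nat) EH (f : {ffun 'I_m -> 'I_n}) :
  good f -> Bf EH f \subset pairs n.
Proof. by move=> gf; apply: imset_pairs => //; apply: subsetDl. Qed.

Lemma AB_disj (n m : nat) EH (f : {ffun 'I_m -> 'I_n}) :
  good f -> [disjoint Af EH f & Bf EH f].
Proof.
move=> gf; rewrite -setI_eq0; apply/eqP/setP => x; rewrite !inE.
apply/negbTE; apply/negP => /andP[/imsetP[e He ->] /imsetP[e' He' E]].
have Ee : e = e' by apply: (imset_inj (good_inj gf)).
by move: He'; rewrite Ee in He; rewrite inE He.
Qed.

Lemma card_Bf (n m : nat) EH (f : {ffun 'I_m -> 'I_n}) :
  good f -> is_graph EH -> #|Bf EH f| = (#|pairs m| - #|EH|)%N.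
Proof. by move=> gf gH; rewrite card_imset_good // cardsD (setIidPr gH). Qed.

Lemma pow_union (R : realType) (x : R) (T : finType) (A A' : {set T}) (a : nat) :
  0 <= x <= 1 -> (#|A :&: A'| <= a)%N ->
  x ^+ #|A :|: A'| * x ^+ a <= x ^+ #|A| * x ^+ #|A'|.
Proof.
move=> /andP[x0 x1] Ha; rewrite -!exprD -cardsUI.
by apply: ler_wiXn2l => //; rewrite leq_add2l.
Qed.

Definition aK (m : nat) (EH : {set {set 'I_m}}) (K : {set 'I_m}) := #|[set e in EH | e \subset K]|.
Definition bK (m : nat) (K : {set 'I_m}) := #|[set e in pairs m | e \subset K]|.

Lemma prob_single (R : realType) (n m : nat) (p : R) EH (f : {ffun 'I_m -> 'I_n}) :
  good f -> is_graph EH ->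
  \sum_(E in powerset (pairs n)) gnp_weight p E * (iso EH E f)%:R =
  p ^+ #|EH| * (1 - p) ^+ (#|pairs m| - #|EH|).
Proof.
move=> gf gH.
rewrite -(card_Bf gf gH) -(card_imset_good EH gf) -gnp_AB_eq ?Bf_pairs ?Af_pairs ?AB_disj //.
rewrite gnp_prob_sum; apply: eq_bigr => E _; rewrite iso_AB //.
Qed.

Lemma prob_joint (R : realType) (n m : nat) (p : R) EH (f g : {ffun 'I_m -> 'I_n}) :
  0 <= p <= 1 -> good f -> good g -> is_graph EH ->
  (\sum_(E in powerset (pairs n)) gnp_weight p E * ((iso EH E f)%:R * (iso EH E g)%:R))
    * (p ^+ aK EH (agree f g) * (1 - p) ^+ bK (agree f g)) <=
  (p ^+ #|EH| * (1 - p) ^+ (#|pairs m| - #|EH|)) ^+ 2.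
Proof.
move=> /andP[p0 p1] gf gg gH.
have -> : \sum_(E in powerset (pairs n)) gnp_weight p E * ((iso EH E f)%:R * (iso EH E g)%:R) =
  gnp_prob p (fun E => (Af EH f :|: Af EH g \subset E) && (Bf EH f :|: Bf EH g \subset ~: E)).
  rewrite gnp_prob_sum; apply: eq_bigr => E _; rewrite !iso_AB // -natrM.
  by rewrite !subUset; case: (Af EH f \subset E); case: (Af EH g \subset E);
     case: (Bf EH f \subset ~: E); case: (Bf EH g \subset ~: E).
have q0 : 0 <= 1 - p by rewrite subr_ge0.
have q1 : 1 - p <= 1 by rewrite lerBlDr lerDl.
apply: le_trans.
  apply: ler_wpM2r; first by rewrite mulr_ge0 // exprn_ge0.
  apply: gnp_AB_le; rewrite ?p0 ?p1 // subUset ?Bf_pairs ?Af_pairs //.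
rewrite mulrACA.
have -> : (p ^+ #|EH| * (1 - p) ^+ (#|pairs m| - #|EH|)) ^+ 2 =
  (p ^+ #|Af EH f| * p ^+ #|Af EH g|) * ((1 - p) ^+ #|Bf EH f| * (1 - p) ^+ #|Bf EH g|).
  by rewrite !card_imset_good // cardsD (setIidPr gH) expr2 mulrACA.
apply: ler_pM; rewrite ?mulr_ge0 ?exprn_ge0 //.
  apply: pow_union; first by rewrite p0 p1.
  apply: leq_trans; first by apply: subset_leq_card; apply: inter_sub.
  by rewrite card_imset_good.
apply: pow_union; first by rewrite q0 q1.
apply: leq_trans; first by apply: subset_leq_card; apply: inter_sub.
rewrite card_imset_good //; apply: subset_leq_card.
by apply/subsetP => e; rewrite !inE => /andP[/andP[_ ->] ->].
Qed.

Lemma count_ffun (R : realType) (I J : finType) (S : I -> {set J}) :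
  \sum_(g : {ffun I -> J}) \prod_i ((g i \in S i)%:R : R) = \prod_i (#|S i|%:R).
Proof.
rewrite (eq_bigr (fun i => \sum_(j : J) ((j \in S i)%:R : R))); last first.
  move=> i _; rewrite -sumr_const big_mkcond /=; apply: eq_bigr => j _.
  by case: (j \in S i).
by rewrite bigA_distr_bigA.
Qed.

Definition Pset (n m : nat) (i : 'I_m) : {set 'I_n} := [set v | in_part i v].

Lemma part_card (n m : nat) (i : 'I_m) : (m %| n)%N -> (n %/ m <= #|Pset n i|)%N.
Proof.
move=> /dvdnP[N Hn].
case: n Hn => [|n'] Hn.
  have : (N * m = 0)%N by []. case: N Hn => [|N] Hn _; first by rewrite div0n.
  by have := ltn_ord i; move: Hn; case: m i => // m i; rewrite mulSn addSn.
have mpos : (0 < m)%N by case: m i Hn => [[]|].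
have Npos : (0 < N)%N by case: N Hn.
have HN : (n'.+1 %/ m = N)%N by rewrite Hn mulnK.
rewrite HN.
have -> : N = #|[set (inord (i * N + j) : 'I_n'.+1) | j : 'I_N]|.
  rewrite card_imset ?card_ord // => j k /(congr1 val).
  have Hi := ltn_ord i.
  have Hj := ltn_ord j; have Hk := ltn_ord k.
  have Hb : forall l, (l < N)%N -> (i * N + l <= n')%N.
    move=> l Hl; have : (i.+1 * N <= m * N)%N by rewrite leq_mul2r Hi orbT.
    rewrite mulSn => H; nia.
  rewrite /= !inordK ?ltnS ?Hb //.
  by move/eqP; rewrite eqn_add2l => /eqP; apply: ord_inj.
apply: subset_leq_card; apply/subsetP => v /imsetP[j _ ->].
rewrite inE /in_part HN inordK.
  by rewrite divnMDl // divn_small ?addn0.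
have Hi := ltn_ord i; have Hj := ltn_ord j.
have : (i.+1 * N <= m * N)%N by rewrite leq_mul2r Hi orbT.
rewrite mulSn => H; nia.
Qed.

Lemma agree_count (R : realType) (n m : nat) (f : {ffun 'I_m -> 'I_n}) (K : {set 'I_m}) :
  good f ->
  \sum_(g : {ffun 'I_m -> 'I_n}) (((good g) && (K \subset agree f g))%:R : R) =
  \prod_i (if i \in K then 1 else (#|Pset n i|%:R)).
Proof.
move=> /forallP gf.
pose S i := if i \in K then [set f i] else Pset n i.
transitivity (\sum_(g : {ffun 'I_m -> 'I_n}) \prod_i ((g i \in S i)%:R : R)).
  apply: eq_bigr => g _; rewrite prod_indic; congr (_ %:R); congr (nat_of_bool _).
  apply/andP/forallP => [[/forallP gg /subsetP HK] i|H].
    rewrite /S; case: ifP => iK; last by rewrite inE gg.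
    by have := HK i iK; rewrite !inE eq_sym.
  split.
    apply/forallP => i; have := H i; rewrite /S; case: ifP => iK; last by rewrite inE.
    by rewrite inE => /eqP ->.
  apply/subsetP => i iK; have := H i; rewrite /S iK !inE eq_sym.
  by [].
rewrite count_ffun; apply: eq_bigr => i _; rewrite /S; case: ifP => _ //.
by rewrite cards1.
Qed.

Lemma good_count (R : realType) (n m : nat) :
  \sum_(g : {ffun 'I_m -> 'I_n}) (((@good n m g))%:R : R) = \prod_(i : 'I_m) (#|Pset n i|%:R).
Proof.
rewrite -count_ffun; apply: eq_bigr => g _; rewrite prod_indic.
by congr (_ %:R); congr (nat_of_bool _); apply: eq_forallb => i; rewrite inE.
Qed.

Definition qv (R : realType) (m : nat) (p : R) (EH : {set {set 'I_m}}) :=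
  p ^+ #|EH| * (1 - p) ^+ (#|pairs m| - #|EH|).
Definition Pi (R : realType) (n m : nat) : R := \prod_(i : 'I_m) (#|Pset n i|%:R).

Lemma mu_eq (R : realType) (n m : nat) (p : R) (EH : {set {set 'I_m}}) :
  is_graph EH ->
  gnp_expect p (@X_H n m EH) = Pi R n m * qv p EH.
Proof.
move=> gH; rewrite /gnp_expect.
under eq_bigr => E _ do rewrite X_H_sum mulr_sumr.
rewrite exchange_big /= /Pi -good_count mulr_suml.
apply: eq_bigr => f _.
case: (boolP (good f)) => gf /=; last by rewrite mul0r; apply: big1 => E _; rewrite mulr0.
by rewrite mul1r prob_single.
Qed.

Definition tK (R : realType) (m : nat) (p : R) (EH : {set {set 'I_m}}) (K : {set 'I_m}) :=
  p ^+ aK EH K * (1 - p) ^+ bK K.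

Lemma tK_gt0 (R : realType) (m : nat) (p : R) EH K : 0 < p < 1 -> 0 < @tK R m p EH K.
Proof.
move=> /andP[p0 p1]; rewrite /tK mulr_gt0 // exprn_gt0 //.
by rewrite subr_gt0.
Qed.

Lemma tK_set0 (R : realType) (m : nat) (p : R) EH : is_graph EH -> @tK R m p EH set0 = 1.
Proof.
move=> /subsetP gH; rewrite /tK /aK /bK.
have H0 : forall D : {set {set 'I_m}}, D \subset pairs m -> [set e in D | e \subset set0] = set0.
  move=> D /subsetP HD; apply/setP => e; rewrite !inE subset0.
  apply/negbTE; apply/negP => /andP[/HD]; rewrite inE => /eqP + /eqP He.
  by rewrite He cards0.
by rewrite !H0 ?cards0 ?expr0 ?mulr1 //; apply/subsetP.
Qed.

Lemma prod_ratio (R : realType) (m n : nat) (Nr : R) (K : {set 'I_m}) :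
  0 < Nr -> (forall i : 'I_m, Nr <= #|Pset n i|%:R) ->
  \prod_(i : 'I_m) (if i \in K then 1 else (#|Pset n i|%:R : R)) <= Pi R n m / Nr ^+ #|K|.
Proof.
move=> N0 HN.
rewrite ler_pdivlMr ?exprn_gt0 // -prod_if -big_split /=.
apply: ler_prod => i _; case: (i \in K); rewrite ?mul1r ?mulr1 ?(ltW N0) ?HN //=.
by rewrite ler0n lexx.
Qed.

Definition Jfg (R : realType) (n m : nat) (p : R) EH (f g : {ffun 'I_m -> 'I_n}) :=
  \sum_(E in powerset (pairs n)) gnp_weight p E * ((iso EH E f)%:R * (iso EH E g)%:R).

Lemma per_g (R : realType) (n m : nat) (p : R) EH (f g : {ffun 'I_m -> 'I_n}) :
  0 < p < 1 -> is_graph EH -> good f ->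
  (good g)%:R * Jfg p EH f g <=
  (good g)%:R * qv p EH ^+ 2 +
  qv p EH ^+ 2 * \sum_(K : {set 'I_m}) (K != set0)%:R * ((good g && (K \subset agree f g))%:R / tK p EH K).
Proof.
move=> /andP[p0 p1] gH gf.
have p01 : 0 < p < 1 by rewrite p0 p1.
have Hs : forall b : {set 'I_m} -> bool, 0 <= \sum_(K : {set 'I_m}) (K != set0)%:R * ((b K)%:R / tK p EH K).
  move=> b; apply: sumr_ge0 => K _; apply: mulr_ge0 => //; apply: divr_ge0 => //.
  exact: ltW (tK_gt0 _ _ p01).
have q0 : 0 <= qv p EH ^+ 2 by rewrite exprn_ge0 // mulr_ge0 ?exprn_ge0 ?subr_ge0 ?(ltW p0) ?(ltW p1).
have Hs' := Hs (fun K => good g && (K \subset agree f g)).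
case: (boolP (good g)) => gg; last first.
  by rewrite !mul0r add0r mulr_ge0.
rewrite /= !mul1r.
have HJ : Jfg p EH f g * tK p EH (agree f g) <= qv p EH ^+ 2.
  by rewrite /Jfg /tK /qv; apply: prob_joint; rewrite // (ltW p0) (ltW p1).
have tpos : 0 < tK p EH (agree f g) by apply: tK_gt0.
have HJ' : Jfg p EH f g <= qv p EH ^+ 2 / tK p EH (agree f g).
  by rewrite ler_pdivlMr //.
case: (eqVneq (agree f g) set0) => HA.
  move: HJ'; rewrite HA tK_set0 // divr1 => HJ'.
  by apply: le_trans HJ' _; rewrite lerDl mulr_ge0.
rewrite (bigD1 (agree f g)) //= HA subxx /= mul1r.
apply: le_trans HJ' _.
rewrite mulrDr div1r addrCA lerDl addr_ge0 // mulr_ge0 //.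
apply: sumr_ge0 => K _; apply: mulr_ge0 => //; apply: divr_ge0 => //.
exact: ltW (tK_gt0 _ _ p01).
Qed.

Lemma S2_expand (R : realType) (n m : nat) (p : R) EH :
  \sum_(E in powerset (pairs n)) gnp_weight p E * ((X_H EH E)%:R : R) ^+ 2 =
  \sum_(f : {ffun 'I_m -> 'I_n}) \sum_(g : {ffun 'I_m -> 'I_n})
     (good f)%:R * ((good g)%:R * Jfg p EH f g).
Proof.
under eq_bigr => E _ do rewrite X_H_sum expr2 mulr_suml mulr_sumr.
rewrite exchange_big /=; apply: eq_bigr => f _.
under eq_bigr => E _ do rewrite mulr_sumr mulr_sumr.
rewrite exchange_big /=; apply: eq_bigr => g _.
rewrite /Jfg mulr_sumr mulr_sumr; apply: eq_bigr => E _.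
by case: (good f); case: (good g); rewrite /= ?mul0r ?mulr0 ?mul1r ?mulr1 // mulrC ?mul0r ?mulr0.
Qed.

Definition Zs (R : realType) (m : nat) (p : R) EH (Nr : R) :=
  \sum_(K : {set 'I_m}) (K != set0)%:R / (tK p EH K * Nr ^+ #|K|).

Lemma per_f (R : realType) (n m : nat) (p : R) EH (Nr : R) (f : {ffun 'I_m -> 'I_n}) :
  0 < p < 1 -> is_graph EH -> 0 < Nr -> (forall i : 'I_m, Nr <= #|Pset n i|%:R) ->
  \sum_(g : {ffun 'I_m -> 'I_n}) (good f)%:R * ((good g)%:R * Jfg p EH f g) <=
  (good f)%:R * (qv p EH ^+ 2 * Pi R n m * (1 + Zs p EH Nr)).
Proof.
move=> p01 gH N0 HN.
case: (boolP (good f)) => gf; last by rewrite mul0r big1 // => g _; rewrite mul0r.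
rewrite mul1r; under eq_bigr => g _ do rewrite mul1r.
apply: le_trans.
  apply: ler_sum => g _; exact: (per_g g p01 gH gf).
rewrite big_split /= -mulr_suml -mulr_sumr good_count -/(Pi R n m).
rewrite mulrDr mulr1 [_ * Pi R n m]mulrC lerD2l.
rewrite [X in _ <= X]mulrAC [X in _ <= X]mulrC; apply: ler_wpM2l.
  case/andP: p01 => p0 p1.
  by rewrite exprn_ge0 // mulr_ge0 ?exprn_ge0 ?subr_ge0 ?(ltW p0) ?(ltW p1).
rewrite exchange_big /= /Zs mulr_sumr; apply: ler_sum => K _.
rewrite -mulr_sumr.
under eq_bigr => g _ do rewrite mulrC.
rewrite -mulr_sumr agree_count //.
case: (K != set0); rewrite ?mul0r ?mulr0 //= !mul1r.
have tp := tK_gt0 EH K p01.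
apply: (@le_trans _ _ ((tK p EH K)^-1 * (Pi R n m / Nr ^+ #|K|))).
  apply: ler_wpM2l; first by rewrite invr_ge0 ltW.
  exact: prod_ratio.
rewrite (invfM (tK p EH K) (Nr ^+ #|K|)) le_eqVlt; apply/orP; left; apply/eqP.
by rewrite mulrCA.
Qed.

Lemma S2_bound (R : realType) (n m : nat) (p : R) EH (Nr : R) :
  0 < p < 1 -> is_graph EH -> 0 < Nr -> (forall i : 'I_m, Nr <= #|Pset n i|%:R) ->
  \sum_(E in powerset (pairs n)) gnp_weight p E * ((X_H EH E)%:R : R) ^+ 2 <=
  (Pi R n m * qv p EH) ^+ 2 * (1 + @Zs R m p EH Nr).
Proof.
move=> p01 gH N0 HN.
rewrite S2_expand.
apply: le_trans.
  apply: ler_sum => f _; exact: (per_f f p01 gH N0 HN).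
rewrite -mulr_suml good_count -/(Pi R n m).
rewrite le_eqVlt; apply/orP; left; apply/eqP; ring.
Qed.

Lemma bernoulli (R : realType) (x : R) (k : nat) :
  0 <= x <= 1 -> 1 - k%:R * x <= (1 - x) ^+ k.
Proof.
move=> /andP[x0 x1]; elim: k => [|k IH]; first by rewrite mul0r subr0 expr0.
rewrite exprS.
have h0 : 0 <= 1 - x by rewrite subr_ge0.
have h1 : 0 <= (1 - x) ^+ k by rewrite exprn_ge0.
have : (1 - x) * (1 - k%:R * x) <= (1 - x) * (1 - x) ^+ k by apply: ler_wpM2l.
have hk : 0 <= k%:R * x ^+ 2 :> R by rewrite mulr_ge0 ?exprn_ge0.
rewrite -natr1; nra.
Qed.

Lemma geom_bound (R : realType) (y : R) (m : nat) :
  0 <= y -> (1 + y) ^+ m * (1 - m%:R * y) <= 1.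
Proof.
move=> y0; elim: m => [|m IH]; first by rewrite expr0 mul0r subr0 mulr1.
rewrite exprSr -mulrA.
apply: le_trans IH; apply: ler_wpM2l; first by rewrite exprn_ge0 // addr_ge0.
have hk : 0 <= m%:R :> R by rewrite ler0n.
rewrite -natr1; nra.
Qed.

Lemma bin2_le (m : nat) : (#|pairs m| <= m * m)%N.
Proof.
rewrite /pairs card_draws card_ord bin2 leq_half_double.
by case: m => // m /=; nia.
Qed.

Lemma tK_lb (R : realType) (m : nat) (p eps : R) (EH : {set {set 'I_m}}) (K : {set 'I_m}) :
  0 < p < 1 -> balanced R EH -> K != set0 -> (m * m)%:R * p <= eps -> eps <= 2^-1 ->
  (p `^ (avg_deg R EH / 4)) ^+ (2 * #|K|) / 2 <= tK p EH K.
Proof.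
move=> /andP[p0 p1] bal K0 Hm He.
rewrite /tK; apply: ler_pM.
- by rewrite exprn_ge0 // powR_ge0.
- by rewrite invr_ge0.
- have Hb := bal K K0; rewrite -/(aK EH K) in Hb.
  have kpos : 0 < #|K|%:R :> R by rewrite ltr0n card_gt0.
  move: Hb; rewrite ler_pdivrMr // => Hb.
  rewrite -powR_mulrn ?powR_ge0 // -powRrM -powR_mulrn ?(ltW p0) //.
  apply: ger_powR; first by rewrite p0 (ltW p1).
  rewrite natrM; move: Hb; rewrite natrM; lra.
- have hb : (bK K <= m * m)%N.
    apply: leq_trans (bin2_le m); apply: subset_leq_card.
    by apply/subsetP => e; rewrite inE => /andP[].
  apply: le_trans (bernoulli _ _); last by rewrite (ltW p0) (ltW p1).
  have : (bK K)%:R * p <= (m * m)%:R * p :> R by rewrite ler_wpM2r ?(ltW p0) // ler_nat.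
  lra.
Qed.

Lemma Zs_bound (R : realType) (m : nat) (p eps : R) (EH : {set {set 'I_m}}) (Nr : R) :
  0 < p < 1 -> balanced R EH -> (m * m)%:R * p <= eps -> 0 < eps -> eps < 7^-1 -> 0 < Nr ->
  m%:R <= eps * (p `^ (avg_deg R EH / 4)) ^+ 2 * Nr ->
  Zs p EH Nr <= 4 * eps.
Proof.
move=> p01 bal Hm e0 e7 N0 Hy.
set c := p `^ (avg_deg R EH / 4).
have c0 : 0 < c by rewrite powR_gt0 //; case/andP: p01.
set y := (c ^+ 2 * Nr)^-1.
have y0 : 0 <= y by rewrite invr_ge0 mulr_ge0 // ?exprn_ge0 ?ltW.
have cN : 0 < c ^+ 2 * Nr by rewrite mulr_gt0 // exprn_gt0.
have He : eps <= 2^-1 by lra.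
have step : Zs p EH Nr <= 2 * \sum_(K : {set 'I_m}) (K != set0)%:R * y ^+ #|K|.
  rewrite /Zs mulr_sumr; apply: ler_sum => K _.
  case: (boolP (K != set0)) => K0 /=; last by rewrite !mul0r mulr0.
  rewrite !mul1r.
  have ht := tK_lb p01 bal K0 Hm He; rewrite -/c in ht.
  have hpos : 0 < (c ^+ 2 * Nr) ^+ #|K| / 2 by rewrite divr_gt0 // exprn_gt0.
  have tp : 0 < tK p EH K by apply: tK_gt0.
  have -> : 2 * y ^+ #|K| = ((c ^+ 2 * Nr) ^+ #|K| / 2)^-1.
    by rewrite invfM invrK /y exprVn mulrC.
  rewrite lef_pV2 ?posrE ?mulr_gt0 ?exprn_gt0 //.
  rewrite exprMn -exprM mulrAC; apply: ler_wpM2r; first by rewrite exprn_ge0 ?ltW.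
  - exact: ht.
  - by case/andP: p01.
  - by case/andP: p01 => _ p1; rewrite subr_gt0.
  - by rewrite invr_gt0.
apply: le_trans step _.
have -> : \sum_(K : {set 'I_m}) (K != set0)%:R * y ^+ #|K| = (1 + y) ^+ m - 1.
  rewrite -sum_pow_card [X in _ = X - 1](bigD1 set0) //= cards0 expr0 addrC addrK.
  rewrite [RHS]big_mkcond; apply: eq_bigr => K _.
  by case: (K != set0); rewrite ?mul1r ?mul0r.
have my : m%:R * y <= eps.
  rewrite /y mulrC -(ler_pM2r cN) mulrAC mulVf ?gt_eqF // mul1r.
  by rewrite mulrA.
have hg := geom_bound m y0.
have P0 : 0 <= (1 + y) ^+ m by rewrite exprn_ge0 // addr_ge0.
have my0 : 0 <= m%:R * y by rewrite mulr_ge0.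
set P := (1 + y) ^+ m in hg P0 *; set u := m%:R * y in hg my my0 *.
have h1 : P * (7^-1 - u) >= 0 by rewrite mulr_ge0 // subr_ge0; lra.
have h2 : P <= 7 / 6 by nra.
have h3 : (7 / 6 - P) * u >= 0 by rewrite mulr_ge0 // subr_ge0.
nra.
Qed.

Lemma weight_ge0 (R : realType) (n : nat) (p : R) (E : {set {set 'I_n}}) : 0 <= p <= 1 -> 0 <= gnp_weight p E.
Proof. by case/andP => p0 p1; rewrite /gnp_weight mulr_ge0 ?exprn_ge0 ?subr_ge0. Qed.

Lemma weight_sum1 (R : realType) (n : nat) (p : R) :
  \sum_(E in powerset (pairs n)) gnp_weight p E = 1.
Proof.
have hd : [disjoint set0 & (set0 : {set {set 'I_n}})] by rewrite -setI_eq0 set0I.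
have := @gnp_AB_eq R n p set0 set0 (sub0set _) (sub0set _) hd.
rewrite cards0 !expr0 mulr1 gnp_prob_sum => <-.
by apply: eq_bigr => E _; rewrite !sub0set mulr1.
Qed.

Lemma cheb (R : realType) (n : nat) (p : R) (X : {set {set 'I_n}} -> R) (mu beta Z : R) :
  0 <= p <= 1 ->
  \sum_(E in powerset (pairs n)) gnp_weight p E * X E = mu ->
  \sum_(E in powerset (pairs n)) gnp_weight p E * X E ^+ 2 <= mu ^+ 2 * (1 + Z) ->
  0 < mu -> 0 <= beta < 1 ->
  gnp_prob p (fun E => X E <= beta * mu) <= Z / (1 - beta) ^+ 2.
Proof.
move=> p01 HX HX2 mu0 /andP[b0 b1].
have hb : 0 < (1 - beta) ^+ 2 by rewrite exprn_gt0 // subr_gt0.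
rewrite ler_pdivlMr // gnp_prob_sum.
have key : \sum_(E in powerset (pairs n)) gnp_weight p E * ((X E <= beta * mu)%R)%:R * ((1 - beta) * mu) ^+ 2
   <= \sum_(E in powerset (pairs n)) gnp_weight p E * (X E - mu) ^+ 2.
  apply: ler_sum => E _; rewrite -mulrA; apply: ler_wpM2l; first exact: weight_ge0.
  case: (boolP (X E <= beta * mu)) => h /=; last by rewrite mul0r sqr_ge0.
  rewrite mul1r.
  have a0 : 0 <= (1 - beta) * mu by rewrite mulr_ge0 ?subr_ge0 ?ltW.
  have a1 : (1 - beta) * mu <= mu - X E by rewrite mulrBl mul1r; lra.
  nra.
have exp2 : \sum_(E in powerset (pairs n)) gnp_weight p E * (X E - mu) ^+ 2 =
   \sum_(E in powerset (pairs n)) gnp_weight p E * X E ^+ 2 - mu ^+ 2.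
  transitivity (\sum_(E in powerset (pairs n)) (gnp_weight p E * X E ^+ 2 + (- (2 * mu)) * (gnp_weight p E * X E) + mu ^+ 2 * gnp_weight p E)).
    by apply: eq_bigr => E' _; ring.
  rewrite !big_split /= -!mulr_sumr HX weight_sum1; ring.
rewrite -(@ler_pM2r _ (mu ^+ 2)) ?exprn_gt0 //.
rewrite -big_distrl /= in key.
apply: le_trans (_ : \sum_(E in powerset (pairs n)) gnp_weight p E * ((X E <= beta * mu)%R)%:R * ((1 - beta) * mu) ^+ 2 <= _).
  by rewrite -big_distrl /= le_eqVlt; apply/orP; left; apply/eqP; ring.
rewrite -big_distrl /=; apply: le_trans key _; rewrite exp2.
move: HX2; nra.
Qed.

Unset Implicit Arguments.

Theorem lemmaC1 (R : realType) (eps p beta : R) (n m : nat)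
    (EH : {set {set 'I_m}}) :
  0 < eps -> eps < 7^-1 ->
  0 < p -> p < 1 ->
  (0 < m)%N -> (m %| n)%N ->
  is_graph EH -> balanced R EH ->
  2 < avg_deg R EH -> avg_deg R EH < 3 ->
  m%:R <= Num.sqrt (eps / p) ->
  m%:R <= 2 `^ (- 4^-1) * p `^ (avg_deg R EH / 4) * Num.sqrt (eps * n%:R) ->
  0 <= beta -> beta < 1 ->
  gnp_prob (n:=n) p (fun EG => (X_H EH EG)%:R <= beta * gnp_expect p (@X_H n m EH))
    <= 4 * eps / (1 - beta) ^+ 2.
Proof.
move=> e0 e7 p0 p1 m0 mn gH bal _ _ H1 H2 b0 b1.
set c := p `^ (avg_deg R EH / 4).
have c0 : 0 < c by rewrite powR_gt0.
have p01 : 0 < p < 1 by rewrite p0 p1.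
have p01' : 0 <= p <= 1 by rewrite ltW // ltW.
have mR : 0 < m%:R :> R by rewrite ltr0n.
have n0 : (0 < n)%N.
  case: n mn H2 => // _; rewrite mulr0 sqrtr0 mulr0 => H2.
  by have := lt_le_trans mR H2; rewrite ltxx.
set N := (n %/ m)%N; set Nr : R := N%:R.
have N0 : (0 < N)%N.
  by case/dvdnP: mn => k Hk; rewrite /N Hk mulnK //; case: k Hk n0 => // ->.
have Nr0 : 0 < Nr by rewrite ltr0n.
have NrE : Nr = n%:R / m%:R by rewrite /Nr /N natf_div.
have HN : forall i : 'I_m, Nr <= #|Pset n i|%:R by move=> i; rewrite ler_nat part_card.
have Hm : (m * m)%:R * p <= eps.
  have ep : 0 <= eps / p by rewrite divr_ge0 ?ltW.
  have : m%:R * m%:R <= eps / p :> R.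
    rewrite -(sqr_sqrtr ep) expr2; apply: ler_pM => //; by rewrite ler0n.
  by rewrite natrM ler_pdivlMr.
have Hy : m%:R <= eps * c ^+ 2 * Nr.
  have h2 : 2 `^ (- 4^-1) <= 1 :> R.
    rewrite -[X in _ <= X](powRr0 2); apply: ler_powR; first by rewrite ler1n.
    by rewrite oppr_le0 invr_ge0.
  have sq0 : 0 <= Num.sqrt (eps * n%:R) by apply: sqrtr_ge0.
  have H3 : m%:R <= c * Num.sqrt (eps * n%:R).
    apply: le_trans H2 _; apply: ler_wpM2r => //.
    by rewrite -[X in _ <= X]mul1r ler_wpM2r // ltW.
  have en : 0 <= eps * n%:R by rewrite mulr_ge0 ?ler0n // ltW.
  have H4 : m%:R * m%:R <= c ^+ 2 * (eps * n%:R).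
    rewrite -(sqr_sqrtr en) -exprMn expr2; apply: ler_pM => //; by rewrite ler0n.
  rewrite NrE -(ler_pM2r mR) -!mulrA mulVf ?gt_eqF // mulr1.
  apply: le_trans H4 _; rewrite le_eqVlt; apply/orP; left; apply/eqP; ring.
have HZ := Zs_bound p01 bal Hm e0 e7 Nr0 Hy.
have Hmu := mu_eq n p gH.
have Pipos : 0 < Pi R n m.
  by rewrite /Pi prodr_gt0 // => i _; apply: lt_le_trans Nr0 (HN i).
have qpos : 0 < qv p EH by rewrite /qv mulr_gt0 // exprn_gt0 // subr_gt0.
have mu0 : 0 < gnp_expect p (@X_H n m EH) by rewrite Hmu mulr_gt0.
apply: le_trans.
  apply: (@cheb R n p (fun E => (X_H EH E)%:R) (gnp_expect p (@X_H n m EH)) beta (Zs p EH Nr)) => //.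
    rewrite Hmu; exact: S2_bound.
  by rewrite b0 b1.
by rewrite ler_pM2r ?invr_gt0 ?exprn_gt0 ?subr_gt0.
Qed.
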